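(* Let $q$ be a prime power, $M\geq 2$ an integer, $n\geq1$, and let $A\in\mathrm{Sp}(2n,q)$ have characteristic polynomial $f$ which is a SRIM polynomial of degree $2n$. Then the equation $\alpha^M=A$ has a solution $\alpha\in\mathrm{Sp}(2n,q)$ if and only if $f$ is an $M^*$-power SRIM polynomial.
   Context: For a monic polynomial $f$ of degree $r$ with $f(0)\neq0$, $f^*(x)=f(0)^{-1}x^rf(x^{-1})$; $f$ is self-reciprocal if $f=f^*$. SRIM means self-reciprocal irreducible monic. A SRIM polynomial $f$ of degree $2k$ ($k\ge1$) is an $M^*$-power SRIM polynomial if $f(x^M)$ has a SRIM factor of degree $2k$. $\mathrm{Sp}(2n,q)$ is the symplectic group of a non-degenerate alternating form on $\mathbb{F}_q^{2n}$. *)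

(* Defs.v *)
From HB Require Import structures.
From mathcomp Require Import all_boot all_order all_algebra all_field.
Set Implicit Arguments. Unset Strict Implicit. Unset Printing Implicit Defensive.
Import GRing.Theory.
Local Open Scope ring_scope.

(* Reciprocal polynomial: f^*(x) = f(0)^{-1} x^r f(1/x), r = deg f.
   In coefficient form: the reversed coefficient sequence scaled by f(0)^{-1}. *)
Definition recip (F : fieldType) (f : {poly F}) : {poly F} :=
  (f`_0)^-1 *: Poly (rev f).

Definition self_reciprocal (F : fieldType) (f : {poly F}) : Prop :=
  f`_0 != 0 /\ recip f = f.

Definition srim (F : fieldType) (f : {poly F}) : Prop :=
  f \is monic /\ irreducible_poly f /\ self_reciprocal f.

Definition Mstar_power_srim (F : fieldType) (M : nat) (f : {poly F}) : Prop :=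
  srim f /\ (exists k, (1 <= k)%N /\ (size f).-1 = k.*2) /\
  exists g : {poly F}, srim g /\ g %| f \Po 'X^M /\ size g = size f.

Definition nondeg_alternating (F : fieldType) (m : nat) (B : 'M[F]_m) : Prop :=
  (forall i, B i i = 0) /\ B^T = - B /\ B \in unitmx.

(* The symplectic group of B: matrices A (acting on row vectors v |-> v A)
   preserving the form. *)
Definition symplectic (F : fieldType) (m : nat) (B A : 'M[F]_m) : Prop :=
  A *m B *m A^T = B.

(* Main.v *)
Require Import Defs.
From HB Require Import structures.
From mathcomp Require Import all_boot all_order all_algebra all_field.
From mathcomp Require Import ring zify.
Set Implicit Arguments. Unset Strict Implicit. Unset Printing Implicit Defensive.
Import GRing.Theory.
Local Open Scope ring_scope.


Lemma horner_mx_comp (F : fieldType) (m : nat) (X : 'M[F]_m.+1) (p q : {poly F}) :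
  horner_mx X (p \Po q) = horner_mx (horner_mx X q) p.
Proof.
elim/poly_ind: p => [|p c IH]; first by rewrite comp_poly0 !rmorph0.
rewrite comp_polyD comp_polyM comp_polyX comp_polyC !rmorphD !rmorphM /=.
by rewrite IH !horner_mx_C horner_mx_X.
Qed.

Lemma horner_mx_tr (F : fieldType) (m : nat) (X : 'M[F]_m.+1) (p : {poly F}) :
  horner_mx X^T p = (horner_mx X p)^T.
Proof.
elim/poly_ind: p => [|p c IH]; first by rewrite !rmorph0 trmx0.
rewrite !rmorphD !rmorphM /= IH !horner_mx_C horner_mx_X linearD /= tr_scalar_mx.
congr (_ + _); rewrite -!mulmxE -trmx_mul.
by rewrite horner_mx_X (comm_horner_mx p (erefl (X *m X))).
Qed.

Lemma horner_mx_conjU (F : fieldType) (m : nat) (U V X : 'M[F]_m.+1) (p : {poly F}) :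
  V *m U = 1%:M ->
  horner_mx (U *m X *m V) p = U *m horner_mx X p *m V.
Proof.
move=> VU.
have UV : U *m V = 1%:M by apply: mulmx1C.
elim/poly_ind: p => [|p c IH].
  by rewrite !rmorph0 mulmx0 mul0mx.
rewrite !rmorphD !rmorphM /= IH !horner_mx_C horner_mx_X.
rewrite horner_mx_X -!mulmxE mulmxDr mulmxDl.
congr (_ + _); last by rewrite mul_mx_scalar -scalemxAl UV scalemx1.
by rewrite !mulmxA -[U *m horner_mx X p *m V *m U](mulmxA _ V U) VU mulmx1.
Qed.


Lemma recip_horner (F K : fieldType) (phi : {rmorphism F -> K}) (p : {poly F}) (x : K) :
  x != 0 ->
  x ^+ (size p).-1 * (map_poly phi (Poly (rev p))).[x^-1] = (map_poly phi p).[x].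
Proof.
move=> nz_x.
rewrite (@horner_coef_wide _ (size p)); last first.
  by rewrite size_map_poly -(size_rev p) size_Poly.
rewrite horner_coef mulr_sumr size_map_poly.
rewrite [rhs in _ = rhs](reindex_inj rev_ord_inj) /=.
apply: eq_bigr => i _; rewrite !coef_map coef_Poly nth_rev // mulrCA.
by congr (_ * _); rewrite -{1}(subnKC (valP i)) addSn addnC exprD exprVn ?mulfK // expf_neq0.
Qed.

Lemma inv_poly_ex (F : fieldType) (p : {poly F}) :
  p`_0 != 0 -> exists r : {poly F}, p %| 'X * r - 1.
Proof.
move=> p0.
exists ((- (p`_0)^-1)%:P * (p %/ 'X)).
have Hm : p %% 'X = (p`_0)%:P.
  by have := modp_XsubC p 0; rewrite polyC0 subr0 horner_coef0.
have He := divp_eq p 'X; rewrite Hm in He.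
apply/dvdpP; exists (- (p`_0)^-1)%:P.
move: p0 He; set c := p`_0; set q := p %/ 'X => p0 He.
rewrite [in RHS]He mulrDr -polyCM mulNr mulVf // polyCN.
by rewrite polyCN; ring.
Qed.

Lemma irr_common_root (F K : fieldType) (phi : {rmorphism F -> K}) (f w : {poly F}) (x : K) :
  irreducible_poly f -> root (map_poly phi f) x -> root (map_poly phi w) x -> f %| w.
Proof.
move=> fI rf rw; apply/negPn; rewrite -irreducible_poly_coprime //.
apply/negP => cop.
have : coprimep (map_poly phi f) (map_poly phi w) by rewrite coprimep_map.
by move/coprimep_root => /(_ _ rf); rewrite -[_ != 0]/(~~ root _ _) rw.
Qed.
HB.instance Definition _ (F : fieldType) (g : {poly F}) (gI : monic_irreducible_poly g) :=
  GRing.isZmodMorphism.Build F {poly %/ g with gI} (qfpoly_const gI) (qpolyC_is_zmod_morphism g).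
HB.instance Definition _ (F : fieldType) (g : {poly F}) (gI : monic_irreducible_poly g) :=
  GRing.isMonoidMorphism.Build F {poly %/ g with gI} (qfpoly_const gI) (qpolyC_is_monoid_morphism g).

Definition qX_of (F : fieldType) (g : {poly F}) (gI : monic_irreducible_poly g) : {poly %/ g with gI} :=
  'qX.

Lemma in_qpoly_ev (F : fieldType) (g : {poly F}) (gI : monic_irreducible_poly g) (p : {poly F}) :
  (in_qpoly g p : {poly %/ g with gI}) = (map_poly (qfpoly_const gI) p).[qX_of gI].
Proof. by rewrite -{1}(comp_polyXr p) in_qpoly_comp_horner. Qed.

Lemma ev_eq0 (F : fieldType) (g : {poly F}) (gI : monic_irreducible_poly g) (p : {poly F}) :
  ((map_poly (qfpoly_const gI) p).[qX_of gI] == 0) = (g %| p).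
Proof.
rewrite -in_qpoly_ev.
apply/eqP/idP => [/val_eqP /= | hDp].
  by rewrite -Pdiv.IdomainMonic.modpE ?mk_monicE //; case: gI.
by apply/val_eqP; rewrite /= -Pdiv.IdomainMonic.modpE mk_monicE //; case: gI.
Qed.

Lemma field_step2 (F : fieldType) (g v : {poly F}) (gI : monic_irreducible_poly g) :
  g %| 'X * v - 1 -> g %| g \Po v -> g %| recip g.
Proof.
move=> H1 H2.
set phi := qfpoly_const gI; set b := qX_of gI.
have ev0 p : g %| p -> (map_poly phi p).[b] = 0 by move=> H; apply/eqP; rewrite ev_eq0.
have Hv := ev0 _ H1.
rewrite rmorphB rmorphM /= map_polyX rmorph1 !hornerE in Hv.
move/eqP: Hv; rewrite subr_eq0 => /eqP Hv.
have bnz : b != 0 by apply/eqP=> b0; move: Hv; rewrite b0 mul0r => /eqP; rewrite eq_sym oner_eq0.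
have Hvb : (map_poly phi v).[b] = b^-1 by rewrite -[RHS]mulr1 -Hv mulKf.
have Hg := ev0 _ H2.
rewrite map_comp_poly horner_comp Hvb in Hg.
have := recip_horner phi g (invr_neq0 bnz); rewrite Hg invrK => /eqP.
rewrite mulf_eq0 expf_eq0 invr_eq0 (negbTE bnz) andbF /= => /eqP Hr.
by rewrite -ev_eq0 /recip map_polyZ hornerZ Hr mulr0.
Qed.

Lemma dvd_root (F K : fieldType) (phi : {rmorphism F -> K}) (f p : {poly F}) (x : K) :
  root (map_poly phi f) x -> f %| p -> (map_poly phi p).[x] = 0.
Proof.
move=> /eqP rf /dvdpP [q ->].
by rewrite rmorphM /= hornerM rf mulr0.
Qed.

Lemma field_step (F : finFieldType) (M : nat) (f g r : {poly F})
  (gI : monic_irreducible_poly g) :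
  irreducible_poly f -> size f = size g -> recip g = g -> g`_0 != 0 ->
  g %| f \Po 'X^M -> f %| 'X * r - 1 ->
  exists h, f %| h ^+ M - 'X /\ f %| h * (h \Po r) - 1.
Proof.
move=> fI sfg Hrg g0 gfM fr.
set phi := qfpoly_const gI; set b := qX_of gI.
have ev0 p : g %| p -> (map_poly phi p).[b] = 0 by move=> H; apply/eqP; rewrite ev_eq0.
set lam := b ^+ M.
have Hf : root (map_poly phi f) lam.
  apply/eqP; have := ev0 _ gfM.
  by rewrite map_comp_poly horner_comp map_polyXn hornerXn.
pose Phi := fun u : {poly_(size f).-1 F} => (map_poly phi (u : {poly F})).[lam].
have Phi_inj : injective Phi.
  move=> u w Huw.
  have : f %| (u : {poly F}) - w.
    apply: (irr_common_root fI Hf).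
    by rewrite /root rmorphB /= hornerD hornerN -/(Phi u) -/(Phi w) Huw subrr.
  have [H0|nz] := eqVneq ((u : {poly F}) - w) 0.
    by move=> _; apply/val_inj/eqP; rewrite -subr_eq0 H0.
  move/(dvdp_leq nz); rewrite leqNgt => /negP []. 
  apply: (leq_ltn_trans (size_polyD _ _)); rewrite size_polyN gtn_max.
  have sf : (0 < size f)%N by case: fI => /ltnW.
  have ltf k : (k <= (size f).-1)%N -> (k < size f)%N by move=> hk; apply: leq_ltn_trans hk _; rewrite prednK.
  by apply/andP; split; apply: ltf; [exact: (size_npoly u) | exact: (size_npoly w)].
have card : (#|{poly %/ g with gI}| <= #|{poly_(size f).-1 F}|)%N.
  by rewrite card_qfpoly card_npoly sfg.
have := inj_card_onto Phi_inj card b.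
case/codomP => u Hu.
set h := (u : {poly F}).
have Hh : (map_poly phi h).[lam] = b by rewrite Hu.
have gP : g %| h \Po 'X^M - 'X.
  rewrite -ev_eq0 -/phi -/b rmorphB /= map_comp_poly hornerD hornerN horner_comp.
  by rewrite map_polyXn hornerXn map_polyX hornerX -/lam Hh subrr.
have bnz : b != 0.
  apply/eqP => b0; have := ev0 _ (dvdpp g); rewrite b0 horner_coef0 coef_map /=.
  by move/eqP; rewrite fmorph_eq0 (negbTE g0).
have Hgi : (map_poly phi g).[b^-1] = 0.
  have := recip_horner phi g bnz; rewrite ev0 // => /eqP.
  rewrite mulf_eq0 expf_eq0 (negbTE bnz) andbF /= => /eqP H.
  have E : map_poly phi g = map_poly phi (recip g) by rewrite Hrg.
  by rewrite E /recip map_polyZ hornerZ H mulr0.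
have Hhi : (map_poly phi h).[b^-1 ^+ M] = b^-1.
  have := dvd_root (introT eqP Hgi) gP.
  rewrite rmorphB /= map_comp_poly hornerD hornerN horner_comp.
  rewrite map_polyXn hornerXn map_polyX hornerX => /eqP; rewrite subr_eq0 => /eqP //.
have Hr : (map_poly phi r).[lam] = lam^-1.
  have := dvd_root Hf fr.
  rewrite rmorphB rmorphM /= map_polyX rmorph1 !hornerE => /eqP; rewrite subr_eq0 => /eqP Hv.
  have lnz : lam != 0 by apply/eqP=> l0; move: Hv; rewrite l0 mul0r => /eqP; rewrite eq_sym oner_eq0.
  by rewrite -[RHS]mulr1 -Hv mulKf.
exists h; split.
  apply: (irr_common_root fI Hf).
  by rewrite /root rmorphB rmorphXn /= map_polyX hornerD hornerN horner_exp hornerX Hh subrr.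
apply: (irr_common_root fI Hf).
rewrite /root rmorphB rmorphM /= map_comp_poly rmorph1 hornerD hornerN hornerM horner_comp.
by rewrite Hr Hh /lam -exprVn Hhi mulfV // hornerC subrr.
Qed.


Lemma recip_monic (F : fieldType) (g : {poly F}) :
  g`_0 != 0 -> size (recip g) = size g /\ recip g \is monic.
Proof.
move=> g0.
have gnz : g != 0 by apply: contraNneq g0 => ->; rewrite coef0.
have Hl : last 0 (rev g) != 0.
  case: (polyseq g) g0 => [|x s] /=; first by rewrite eqxx.
  by rewrite rev_cons last_rcons.
have HP := PolyK Hl.
have sP : size (Poly (rev g)) = size g by rewrite HP size_rev.
have lP : lead_coef (Poly (rev g)) = g`_0.
  rewrite lead_coefE HP.
  case: (polyseq g) g0 => [|x s] /=; first by rewrite eqxx.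
  by move=> _; rewrite rev_cons size_rcons /= nth_rcons ltnn eqxx.
split; first by rewrite /recip size_scale ?sP // invr_eq0.
by rewrite /recip monicE lead_coefZ lP mulVf.
Qed.


Lemma mxminpoly_char_irr (F : fieldType) m (A : 'M[F]_m.+1) :
  irreducible_poly (char_poly A) -> mxminpoly A = char_poly A.
Proof.
case=> _ H.
have := H _ _ (mxminpoly_dvd_char A).
rewrite size_mxminpoly eqSS -lt0n mxminpoly_nonconstant => /(_ isT).
by rewrite eqp_monic ?mxminpoly_monic ?char_poly_monic // => /eqP.
Qed.

Lemma irr_prime (F : fieldType) (f u v : {poly F}) :
  irreducible_poly f -> f %| u * v -> f %| u \/ f %| v.
Proof.
move=> fI fuv; have [fv|nfv] := boolP (f %| v); first by right.
left; rewrite -irreducible_poly_coprime // in nfv.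
by rewrite -(Gauss_dvdpl _ nfv).
Qed.


Lemma fwd (F : fieldType) (M m : nat) (B A al : 'M[F]_m.+1) :
  (0 < m)%N -> B \in unitmx -> irreducible_poly (char_poly A) ->
  al *m B *m al^T = B -> al ^+ M = A ->
  exists g, srim g /\ g %| char_poly A \Po 'X^M /\ size g = size (char_poly A).
Proof.
move=> m0 Bu fI Hs HM.
have mA := mxminpoly_char_irr fI.
have dA : degree_mxminpoly A = m.+1.
  by have := size_mxminpoly A; rewrite mA size_char_poly => -[].
have dle : (degree_mxminpoly al <= m.+1)%N.
  have := dvdp_leq (monic_neq0 (char_poly_monic al)) (mxminpoly_dvd_char al).
  by rewrite size_mxminpoly size_char_poly.
have sub1 : (powers_mx A m.+1 <= powers_mx al (degree_mxminpoly al))%MS.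
  apply/row_subP => i; rewrite rowK.
  have -> : A ^+ i = horner_mx al 'X^(M * i) by rewrite rmorphXn /= horner_mx_X exprM HM.
  exact: horner_mx_mem.
have rA : \rank (powers_mx A m.+1) = m.+1.
  by have := minpoly_mx_free A; rewrite dA => /eqP.
have ral : \rank (powers_mx al (degree_mxminpoly al)) = degree_mxminpoly al.
  by have := minpoly_mx_free al => /eqP.
have dal : degree_mxminpoly al = m.+1.
  apply/eqP; rewrite eqn_leq dle /= -{1}rA -ral; exact: mxrankS.
have sub2 : (powers_mx al (degree_mxminpoly al) <= powers_mx A m.+1)%MS.
  by rewrite -(geq_leqif (mxrank_leqif_sup sub1)) rA ral dal.
have alin : (al \in powers_mx A (degree_mxminpoly A))%MS.
  rewrite dA; apply: submx_trans sub2.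
  by have := horner_mx_mem al 'X; rewrite horner_mx_X.
set k := mx_inv_horner A al.
have Hk : horner_mx A k = al by exact: mx_inv_hornerK.
have hcomp u : horner_mx al u = horner_mx A (u \Po k) by rewrite horner_mx_comp Hk.
have hA0 w : (horner_mx A w = 0) <-> (char_poly A %| w).
  by rewrite -mA; split => [/mxminpoly_minP|/mxminpoly_minP].
set g := mxminpoly al.
have gnz : g != 0 by apply: monic_neq0; apply: mxminpoly_monic.
have sg : size g = m.+2 by rewrite size_mxminpoly dal.
have gI : irreducible_poly g.
  split; first by rewrite sg.
  move=> q sq qg.
  have qnz : q != 0 by apply/eqP => q0; move: qg gnz; rewrite q0 dvd0p => ->.
  have Hg := mx_root_minpoly al; rewrite -/g -(divpK qg) hcomp comp_polyM in Hg.
  case: (irr_prime fI (proj1 (hA0 _) Hg)) => /(proj2 (hA0 _)); rewrite -hcomp => /mxminpoly_minP.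
    rewrite -/g => gq.
    have qq : g %/ q != 0 by apply: contraNneq gnz => q0; rewrite -(divpK qg) q0 mul0r.
    have := dvdp_leq qq gq; rewrite size_divp // sg.
    have := size_poly_gt0 q; rewrite qnz => /= q1.
    move: sq; move: (size q) q1 => s; lia.
  by rewrite -/g => gq; rewrite /eqp qg gq.
have gmI : monic_irreducible_poly g by split=> //; apply: mxminpoly_monic.
have g0 : g`_0 != 0.
  apply/negP => /eqP g0.
  have : root g 0 by rewrite /root horner_coef0 g0.
  rewrite root_factor_theorem => Xg.
  have [_ gI2] := gI; have := gI2 _ _ Xg; rewrite size_XsubC => /(_ isT) /eqp_size.
  rewrite size_XsubC sg; lia.
exists g; split; last split.
- split; first exact: mxminpoly_monic.
  split=> //; split=> //.
  set ga := B *m al^T *m invmx B.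
  have aga : al *m ga = 1%:M by rewrite /ga !mulmxA Hs mulmxV.
  have gaa : ga *m al = 1%:M by apply: mulmx1C.
  have [v Hv] := inv_poly_ex g0.
  have Hva : horner_mx al v = ga.
    move/mxminpoly_minP: Hv; rewrite rmorphB rmorphM /= rmorph1 horner_mx_X.
    move/eqP; rewrite subr_eq0 => /eqP Hv'.
    by rewrite -[LHS]mul1mx -gaa -mulmxA mulmxE Hv' mulr1.
  have Hgga : horner_mx ga g = 0.
    rewrite /ga horner_mx_conjU ?mulVmx // horner_mx_tr mx_root_minpoly.
    by rewrite trmx0 mulmx0 mul0mx.
  have gv : g %| g \Po v by apply/mxminpoly_minP; rewrite horner_mx_comp Hva.
  have grg := field_step2 gmI Hv gv.
  have [sr mr] := recip_monic g0.
  apply/eqP; rewrite -eqp_monic ?mxminpoly_monic // eqp_sym -dvdp_size_eqp //.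
  by rewrite sr.
- apply/mxminpoly_minP; rewrite horner_mx_comp rmorphXn /= horner_mx_X HM.
  exact: Cayley_Hamilton.
- by rewrite sg size_char_poly.
Qed.


Lemma bwd (F : finFieldType) (M m : nat) (B A : 'M[F]_m.+1) (g : {poly F}) :
  B \in unitmx -> A *m B *m A^T = B -> srim (char_poly A) -> srim g ->
  g %| char_poly A \Po 'X^M -> size g = size (char_poly A) ->
  exists al : 'M[F]_m.+1, al *m B *m al^T = B /\ al ^+ M = A.
Proof.
move=> Bu HA [fM [fI [f0 _]]] [gM [gI [g0 grg]]] gfM sg.
have [r Hr] := inv_poly_ex f0.
have gmI : monic_irreducible_poly g by [].
have [h [H1 H2]] := field_step gmI fI (esym sg) grg g0 gfM Hr.
have hA0 w : char_poly A %| w -> horner_mx A w = 0.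
  by case/dvdpP => q ->; rewrite rmorphM /= Cayley_Hamilton mulr0.
exists (horner_mx A h); split; last first.
  move: (hA0 _ H1); rewrite rmorphB rmorphXn /= horner_mx_X.
  by move/eqP; rewrite subr_eq0 => /eqP.
set A' := horner_mx A r.
have AA' : A *m A' = 1%:M.
  move: (hA0 _ Hr); rewrite rmorphB rmorphM /= horner_mx_X rmorph1.
  by move/eqP; rewrite subr_eq0 => /eqP.
have A'A : A' *m A = 1%:M by apply: mulmx1C.
have AT : A^T = invmx B *m A' *m B.
  have E : B *m A^T = A' *m B.
    by rewrite -[LHS]mul1mx -A'A -!mulmxA [A *m (B *m _)]mulmxA HA.
  by rewrite -mulmxA -E mulmxA mulVmx // mul1mx.
have alT : (horner_mx A h)^T = invmx B *m horner_mx A (h \Po r) *m B.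
  by rewrite -horner_mx_tr AT horner_mx_conjU ?mulmxV // horner_mx_comp.
rewrite alT !mulmxA -[horner_mx A h *m B *m invmx B]mulmxA mulmxV // mulmx1.
move: (hA0 _ H2); rewrite rmorphB rmorphM /= rmorph1.
by move/eqP; rewrite subr_eq0 => /eqP; rewrite mulmxE => ->; rewrite mul1r.
Qed.

Unset Implicit Arguments.
Set Strict Implicit.


Theorem corollary5p3 (F : finFieldType) (M n : nat)
  (B A : 'M[F]_(n.*2)) :
  (2 <= M)%N -> (1 <= n)%N ->
  nondeg_alternating B ->
  symplectic B A ->
  srim (char_poly A) ->
  (exists alpha : 'M[F]_(n.*2), symplectic B alpha /\ alpha ^+ M = A)
  <-> Mstar_power_srim M (char_poly A).
Proof.
case: n B A => [//|n'] B A _ _ [_ [_ Bu]] HA fS.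
split.
  case=> al [Hs HM].
  split=> //; split.
    by exists n'.+1; rewrite size_char_poly.
  have := @fwd F M (n'.*2).+1 B A al isT Bu (proj1 (proj2 fS)) Hs HM.
  by [].
case=> _ [_ [g [gS [gd sg]]]].
exact: (@bwd F M (n'.*2).+1 B A g Bu HA fS gS gd sg).
Qed.
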